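(* Let $n\ge 3$ and let $w(t)$ be the solution of \[ w''+\frac{n-1}{t}w'+e^{w}=0,\qquad w(0)=0,\quad w'(0)=0 \qquad (t>0). \] Set $\lambda(t)=t^2e^{w(t)}$. If $t_n>0$ satisfies $\lambda'(t_n)=0$ (that is, the corresponding solution of the Gelfand problem is singular), then $\lambda''(t_n)\neq 0$.
   Context: The Gelfand problem is $\Delta u+\lambda e^u=0$ for $|x|<1$ in $\mathbb{R}^n$, with $u=0$ on $|x|=1$. Its solutions are radial, $u=u(|x|)$. The solution $w$ above is defined for all $t>0$. The full solution set of the Gelfand problem is the curve $t\mapsto(\lambda(t),u_t)$, $t\in(0,\infty)$, where $u_t(x)=w(t|x|)-w(t)$ and $\lambda(t)=t^2e^{w(t)}$. *)

(* Defs.v *)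
From Stdlib Require Import Reals.
From Coquelicot Require Import Coquelicot.
Open Scope R_scope.

Definition gelfand_radial_solution (n : nat) (w : R -> R) : Prop :=
  (forall t, 0 < t ->
     ex_derive w t /\ ex_derive (Derive w) t /\
     Derive_n w 2 t + (INR n - 1) / t * Derive w t + exp (w t) = 0) /\
  w 0 = 0 /\
  filterlim w (at_right 0) (locally 0) /\
  filterlim (Derive w) (at_right 0) (locally 0).

Definition gelfand_lambda (w : R -> R) (t : R) : R := t ^ 2 * exp (w t).

(* Main.v *)
Require Import Defs.
From Stdlib Require Import Reals Lra Lia.
From Coquelicot Require Import Coquelicot.
Open Scope R_scope.

Definition cc (n : nat) := 2 * (INR n - 2).
Definition vv (n : nat) (w : R -> R) t := w t + 2 * ln t + - ln (cc n).
Definition GG (n : nat) (w : R -> R) t :=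
  ((t * Derive w t + 2) * ((t * Derive w t + 2) * 1) * / 2 +
   cc n * (exp (vv n w t) + - (1) + - (vv n w t))) * t ^ (2 * (n - 2)).

Lemma cc_pos n : (3 <= n)%nat -> 0 < cc n.
Proof. intros H. unfold cc. apply le_INR in H. simpl in H. lra. Qed.

Lemma INR_k n : (3 <= n)%nat -> INR (2 * (n - 2)) = cc n.
Proof. intros H. unfold cc. rewrite mult_INR, minus_INR by lia. simpl. ring. Qed.

Lemma exp_vv n w t : (3 <= n)%nat -> 0 < t ->
  exp (vv n w t) = exp (w t) * t ^ 2 / cc n.
Proof.
  intros Hn Ht. unfold vv. rewrite !exp_plus, exp_Ropp, exp_ln by (apply cc_pos; auto).
  replace (2 * ln t) with (ln t + ln t) by ring. rewrite exp_plus, exp_ln by auto.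
  field. apply Rgt_not_eq, cc_pos; auto.
Qed.

Lemma GG_deriv n w t : (3 <= n)%nat -> 0 < t ->
  ex_derive w t -> ex_derive (Derive w) t ->
  Derive_n w 2 t + (INR n - 1) / t * Derive w t + exp (w t) = 0 ->
  is_derive (GG n w) t (cc n * cc n * (exp (vv n w t) + - (1) + - (vv n w t)) * t ^ (pred (2 * (n - 2)))).
Proof.
  intros Hn Ht H1 H2 Hode.
  assert (Hc := cc_pos n Hn).
  unfold GG, vv. auto_derive.
  { repeat split; auto. }
  change (Derive (fun x => Derive w x) t) with (Derive_n w 2 t).
  change (Derive (fun x => w x) t) with (Derive w t).
  change (n - 2 + (n - 2 + 0))%nat with (2 * (n - 2))%nat.
  rewrite INR_k by auto.
  fold (vv n w t). rewrite exp_vv by auto.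
  assert (Hk : (2 * (n - 2))%nat = S (pred (2 * (n - 2)))) by lia.
  set (m := pred (2 * (n - 2))) in Hk |- *. rewrite Hk.
  change (Nat.pred (S m)) with m. change (t ^ S m) with (t * t ^ m).
  replace (Derive_n w 2 t) with (- ((INR n - 1) / t * Derive w t) - exp (w t)) by lra.
  assert (Hc' : cc n <> 0) by lra.
  unfold cc in *. field. split; lra.
Qed.

Lemma lam_d1 w t : ex_derive w t ->
  Derive (gelfand_lambda w) t = 2 * t * exp (w t) + t ^ 2 * Derive w t * exp (w t).
Proof.
  intros H. apply is_derive_unique. unfold gelfand_lambda. auto_derive.
  { auto. } change (Derive (fun x => w x) t) with (Derive w t). simpl. ring.
Qed.

Lemma lam_d2 w t : 0 < t -> (forall s, 0 < s -> ex_derive w s) -> ex_derive (Derive w) t ->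
  Derive_n (gelfand_lambda w) 2 t =
  2 * exp (w t) + 4 * t * Derive w t * exp (w t) + t ^ 2 * Derive_n w 2 t * exp (w t)
  + t ^ 2 * Derive w t ^ 2 * exp (w t).
Proof.
  intros Ht Hw H2.
  change (Derive_n (gelfand_lambda w) 2 t) with (Derive (Derive (gelfand_lambda w)) t).
  rewrite (Derive_ext_loc _ (fun s => 2 * s * exp (w s) + s ^ 2 * Derive w s * exp (w s))).
  - apply is_derive_unique. auto_derive.
    { repeat split; auto. }
    change (Derive (fun x => Derive w x) t) with (Derive_n w 2 t).
    change (Derive (fun x => w x) t) with (Derive w t). simpl. ring.
  - exists (mkposreal t Ht). intros y Hy. apply lam_d1, Hw.
    unfold ball in Hy; simpl in Hy; unfold AbsRing_ball, abs, minus, plus, opp in Hy; simpl in Hy.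
    apply Rabs_lt_between in Hy. lra.
Qed.

Theorem theorem5p1 (n : nat) (w : R -> R) :
  (3 <= n)%nat ->
  gelfand_radial_solution n w ->
  forall tn : R, 0 < tn ->
    Derive (gelfand_lambda w) tn = 0 ->
    Derive_n (gelfand_lambda w) 2 tn <> 0.
Proof.
  intros Hn [Hode [H0 [Hc Hd]]] tn Htn Hl1 Hl2.
  assert (Hcp := cc_pos n Hn).
  destruct (Hode tn Htn) as [E1 [E2 E3]].
  assert (Hw : forall s, 0 < s -> ex_derive w s) by (intros s Hs; apply (Hode s Hs)).
  rewrite lam_d1 in Hl1 by auto.
  rewrite lam_d2 in Hl2 by auto.
  assert (He := exp_pos (w tn)).
  assert (P0 : tn * Derive w tn + 2 = 0).
  { apply (Rmult_eq_reg_l (tn * exp (w tn))). 2: apply Rgt_not_eq; nra. nra. }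
  assert (Q0 : exp (w tn) * tn ^ 2 = cc n).
  { replace (Derive_n w 2 tn) with (- ((INR n - 1) / tn * Derive w tn) - exp (w tn)) in Hl2 by lra.
    assert (Hl2' : exp (w tn) * (2 + 4 * (tn * Derive w tn) - (INR n - 1) * (tn * Derive w tn)
       + (tn * Derive w tn) ^ 2 - tn ^ 2 * exp (w tn)) = 0).
    { rewrite <- Hl2. field. lra. }
    replace (tn * Derive w tn) with (-2) in Hl2' by lra.
    apply (Rmult_eq_reg_l (exp (w tn))). 2: lra. unfold cc. nra. }
  assert (V0 : vv n w tn = 0).
  { rewrite <- (ln_exp (vv n w tn)), exp_vv, Q0 by auto.
    replace (cc n / cc n) with 1 by (field; lra). apply ln_1. }
  assert (G0 : GG n w tn = 0).
  { unfold GG. rewrite V0, P0, exp_0. ring. }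
  assert (Gle : forall t, 0 < t < tn -> GG n w t <= 0).
  { intros t Ht.
    destruct (MVT_gen (GG n w) t tn
       (fun s => cc n * cc n * (exp (vv n w s) + - (1) + - (vv n w s)) * s ^ (pred (2 * (n - 2)))))
      as [xi [Hxi Heq]].
    - intros x Hx. rewrite Rmin_left, Rmax_right in Hx by lra.
      destruct (Hode x ltac:(lra)) as [A [B C]]. apply GG_deriv; auto; lra.
    - intros x Hx. rewrite Rmin_left, Rmax_right in Hx by lra.
      destruct (Hode x ltac:(lra)) as [A [B C]].
      apply (proj2 (continuity_pt_filterlim _ _)). apply (ex_derive_continuous (GG n w) x).
      eexists. apply GG_deriv; auto; lra.
    - rewrite Rmin_left, Rmax_right in Hxi by lra.
      assert (0 <= cc n * cc n * (exp (vv n w xi) + - (1) + - (vv n w xi)) * xi ^ (pred (2 * (n - 2)))).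
      { apply Rmult_le_pos. apply Rmult_le_pos. nra.
        pose proof (exp_ineq1_le (vv n w xi)). lra.
        apply pow_le. lra. }
      nra. }
  assert (P : forall t, 0 < t < tn -> t * Derive w t + 2 = 0).
  { intros t Ht. specialize (Gle t Ht). unfold GG in Gle.
    pose proof (exp_ineq1_le (vv n w t)).
    assert (0 < t ^ (2 * (n - 2))) by (apply pow_lt; lra).
    set (p := t * Derive w t + 2) in *.
    assert (p * p <= 0).
    { assert (0 <= cc n * (exp (vv n w t) + - (1) + - vv n w t)) by (apply Rmult_le_pos; lra).
      nra. }
    nra. }
  apply filterlim_locally with (eps := mkposreal 1 Rlt_0_1) in Hd.
  destruct Hd as [d Hd].
  set (t := Rmin (tn / 2) (Rmin (d / 2) (1 / 2))).
  assert (Ht1 : 0 < t).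
  { unfold t. apply Rmin_pos. lra. apply Rmin_pos. destruct d; simpl; lra. lra. }
  assert (Ht2 : t <= tn / 2) by apply Rmin_l.
  assert (Ht3 : t <= d / 2) by (eapply Rle_trans; [apply Rmin_r | apply Rmin_l]).
  assert (Ht4 : t <= 1 / 2) by (eapply Rle_trans; [apply Rmin_r | apply Rmin_r]).
  assert (Hb : ball 0 d t).
  { unfold ball; simpl; unfold AbsRing_ball, abs, minus, plus, opp; simpl.
    rewrite Ropp_0, Rplus_0_r, Rabs_pos_eq by lra. destruct d; simpl in *; lra. }
  specialize (Hd t Hb Ht1).
  unfold ball in Hd; simpl in Hd; unfold AbsRing_ball, abs, minus, plus, opp in Hd; simpl in Hd.
  rewrite Ropp_0, Rplus_0_r in Hd. apply Rabs_lt_between in Hd.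
  specialize (P t ltac:(lra)).
  nra.
Qed.
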